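(* Let $G$ be an abelian group and let $A,B,C$ be nonempty finite subsets of $G$ with $1\in C$. Then either $ABC=AB$ or $|ABC|\geq |A|+|B|$.
   Context: For subsets $X,Y,Z$ of a multiplicative group $G$, $XY=\{xy\mid x\in X,\ y\in Y\}$ and $XYZ=\{xyz\mid x\in X,\ y\in Y,\ z\in Z\}$. *)

(* Defs.v *)
(* An abelian group is modelled as a zmodType (written additively). *)
From HB Require Import structures.
From mathcomp Require Import all_boot all_order all_algebra.
Set Implicit Arguments. Unset Strict Implicit. Unset Printing Implicit Defensive.
Import GRing.Theory.
Local Open Scope ring_scope.

(* Finite subsets of G are represented by sequences; the sumset XY is the
   duplicate-free list of all x + y with x in X, y in Y. *)
Definition sumset (G : zmodType) (X Y : seq G) : seq G :=
  undup [seq x + y | x <- X, y <- Y].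

(* Main.v *)
Require Import Defs.
From HB Require Import structures.
From mathcomp Require Import all_boot all_order all_algebra.
Import GRing.Theory.
Local Open Scope ring_scope.

Section Core.
Variable G : zmodType.

Lemma memS (X Y : seq G) z :
  reflect (exists x y, [/\ x \in X, y \in Y & z = x + y]) (z \in sumset X Y).
Proof.
rewrite /sumset mem_undup; apply: (iffP allpairsP).
  by case=> [[x y]] /= [hx hy ->]; exists x, y.
by case=> x [y [hx hy ->]]; exists (x, y).
Qed.

Lemma memSf (X Y : seq G) x y : x \in X -> y \in Y -> x + y \in sumset X Y.
Proof. by move=> hx hy; apply/memS; exists x, y. Qed.

Definition U (c : G) (S : seq G) := undup (S ++ [seq s + c | s <- S]).

Lemma U_mono c (S1 S2 : seq G) : {subset S1 <= S2} ->
  (size (U c S1) <= size (U c S2))%N.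
Proof.
move=> sub; apply: uniq_leq_size; first exact: undup_uniq.
move=> z; rewrite !mem_undup !mem_cat => /orP [/sub -> //|/mapP [s hs ->]].
by apply/orP; right; apply: map_f; apply: sub.
Qed.

Lemma core c n : forall A B : seq G, uniq A -> uniq B -> (size B <= n)%N ->
  forall a0 b0, a0 \in A -> b0 \in B -> a0 + b0 + c \notin sumset A B ->
  (size A + size B <= size (U c (sumset A B)))%N.
Proof.
elim: n => [|n IH] A B uA uB hB a0 b0 ha0 hb0 hx.
  by move: hB; rewrite leqn0 => /nilP Be; rewrite Be in hb0.
case: (boolP (all (fun a => all (fun b => b + (a - b0) \in A) B) A)) => [Hall|Hn].
- have H : forall a b, a \in A -> b \in B -> a + (b - b0) \in A.
    move=> a b ha hb; move/allP: Hall => /(_ a ha) /allP /(_ b hb).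
    by rewrite addrCA.
  have H' : forall a b, a \in A -> b \in B -> a - (b - b0) \in A.
    move=> a b ha hb.
    have sb : {subset [seq x + (b - b0) | x <- A] <= A}.
      by move=> z /mapP [x hx1 ->]; exact: H.
    have [_ eqm] := uniq_min_size (etrans (map_inj_uniq (addIr _) _) uA) sb
      (eq_leq (esym (size_map _ _))).
    by move: ha; rewrite -eqm => /mapP [x hx1 ->]; rewrite addrK.
  pose L := [seq a + b0 | a <- A] ++ [seq a0 + b0 + c + (b - b0) | b <- B].
  have uL : uniq L.
    have i1 : injective (fun a : G => a + b0) by exact: addIr.
    have i2 : injective (fun b : G => a0 + b0 + c + (b - b0)).
      by move=> x y /= /addrI /addIr.
    rewrite cat_uniq (map_inj_uniq i1) (map_inj_uniq i2) uA uB /=.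
    rewrite andbT; apply/hasPn => z /mapP [b hb ->]; apply/negP => /mapP [a ha e].
    move: hx; rewrite (_ : a0 + b0 + c = a - (b - b0) + b0).
      by rewrite memSf // H'.
    by rewrite -(addrK (b - b0) (a0 + b0 + c)) e addrAC.
  have := uniq_leq_size uL.
  rewrite size_cat !size_map; apply => z; rewrite mem_cat mem_undup mem_cat.
  case/orP => /mapP [x hx2 ->]; first by rewrite memSf.
  apply/orP; right; apply/mapP; exists (a0 + (x - b0) + b0); first by rewrite memSf // H.
  by rewrite addrAC (addrAC a0) addrAC.
- have [a1 ha1 /allPn [b1 hb1 hnb1]] := allPn Hn.
  pose e := a1 - b0.
  pose A' := A ++ [seq b + e | b <- [seq b <- B | b + e \notin A]].
  pose B' := [seq b <- B | b + e \in A].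
  have sub : {subset sumset A' B' <= sumset A B}.
    move=> z /memS [x [y [hx3 hy ->]]].
    move: hy; rewrite mem_filter => /andP [hy1 hy2].
    move: hx3; rewrite mem_cat => /orP [hx3|/mapP [b]]; first by rewrite memSf.
    rewrite mem_filter => /andP [_ hb] ->.
    by rewrite (_ : b + e + y = (y + e) + b) ?memSf // addrC addrCA addrC.
  have uA' : uniq A'.
    rewrite cat_uniq uA map_inj_uniq ?filter_uniq //=; last exact: addIr.
    rewrite andbT; apply/hasPn => z /mapP [b]; rewrite mem_filter => /andP [hb _] ->.
    exact: hb.
  have hB' : (size B' <= n)%N.
    rewrite -ltnS; apply: leq_trans hB.
    rewrite size_filter -(count_predC (fun b => b + e \in A) B) -{1}(addn0 (count _ _)).
    by rewrite ltn_add2l -has_count; apply/hasP; exists b1.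
  have := IH A' B' uA' (filter_uniq _ uB) hB' a0 b0.
  rewrite mem_cat ha0 mem_filter hb0 /e (addrC b0 (a1 - b0)) subrK ha1 => /(_ isT isT).
  have -> : (size A' + size B' = size A + size B)%N.
    rewrite size_cat size_map !size_filter -addnA addnC.
    by rewrite -(count_predC (fun b => b + e \in A) B) [in RHS]addnC [X in (X + _)%N = _]addnC.
  move=> /(_ (contra (@sub _) hx)) h; apply: leq_trans h _.
  exact: U_mono.
Qed.

End Core.

Theorem mainTheorem2 (G : zmodType) (A B C : seq G) :
  A != [::] -> B != [::] -> C != [::] -> 0 \in C ->
  (sumset (sumset A B) C =i sumset A B) \/
  (size (undup A) + size (undup B) <= size (sumset (sumset A B) C))%N.
Proof.
move=> _ _ _ hC0.
case: (boolP (all (fun y => y \in sumset A B) (sumset (sumset A B) C))) => [/allP h|/allPn [y hy hny]].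
  left => z; apply/idP/idP; first exact: h.
  by move=> hz; rewrite -(addr0 z) memSf.
right.
move/memS: hy => [s [c [hs hc eys]]].
move/memS: hs => [a0 [b0 [ha0 hb0 es]]].
have eqS : sumset (undup A) (undup B) =i sumset A B.
  move=> z; apply/memS/memS => [[u [v [hu hv ->]]]|[u [v [hu hv ->]]]];
    by exists u, v; rewrite ?mem_undup in hu hv *.
have := @core G c _ (undup A) (undup B) (undup_uniq A) (undup_uniq B) (leqnn _) a0 b0.
have ha0' : a0 \in undup A by rewrite mem_undup.
have hb0' : b0 \in undup B by rewrite mem_undup.
move=> /(_ ha0' hb0'); rewrite -es -eys eqS => /(_ hny) h.
apply: leq_trans h _; apply: uniq_leq_size; first exact: undup_uniq.
move=> z; rewrite mem_undup mem_cat => /orP [|/mapP [t ht ->]].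
  by rewrite eqS => hz; rewrite -(addr0 z) memSf.
by rewrite memSf // -eqS.
Qed.
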